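(* Let $g$ be the contravariant metric associated with an admissible data set and, for each vertex $\alpha$, let $K^\alpha(t_\alpha)$ be the family of Killing tensors defined by $K^\alpha(t_\alpha)(\xi,\eta)=g(S^\alpha(t_\alpha)\xi,\eta)$ with $S^\alpha(t_\alpha)$ as below; it is a polynomial of degree $n_\alpha-1$ in $t_\alpha$. For $j=1,\dots,n_\alpha$ let $I^\alpha_j$ be the quadratic function on $T^*M$ given by $p\mapsto (K^\alpha_j)^{ab}p_ap_b$, where $K^\alpha_j$ is the coefficient of $t_\alpha^{\,n_\alpha-j}$ in $K^\alpha(t_\alpha)$ and indices are raised with $g$. Order the $n$ integrals as $I=(I^1_1,\dots,I^1_{n_1},I^2_1,\dots,I^2_{n_2},\dots,I^B_{n_B})^\top$ and the momenta as $P=(p_{x_1^1}^2,\dots,p_{x_1^{n_1}}^2,\dots,p_{x_B^{n_B}}^2)^\top$. Let $S$ be the $n\times n$ matrix whose rows are indexed by the coordinates $x_\beta^i$ and whose columns are indexed by the integrals $I^\alpha_j$, with entries - $S_{(\alpha,i),(\alpha,j)}=\dfrac{(x_\alpha^i)^{n_\alpha-j}}{P_\alpha(x_\alpha^i)}$; - if $\beta=\operatorname{next}(\alpha)$: $S_{(\beta,i),(\alpha,1)}=\dfrac{1}{P_\beta(x_\beta^i)\,(x_\beta^i-\lambda_\alpha)}$ and $S_{(\beta,i),(\alpha,j)}=0$ for $j\ge2$; - $S_{(\beta,i),(\alpha,j)}=0$ whenever $\beta\ne\alpha$ and $\beta\neq\operatorname{next}(\alpha)$. Then $S\,I=P$ (so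 $S$ is a Stäckel matrix: its row indexed by $x_\beta^i$ depends only on $x_\beta^i$). Here $S^\alpha(t_\alpha)$ is block-diagonal w.r.t. $(X_1,\dots,X_B)$ with $\alpha$-block $f_\alpha^{-1}(t_\alpha\operatorname{Id}-L_\alpha)^{-1}\det(t_\alpha\operatorname{Id}-L_\alpha)$, with $\beta$-block $\Phi^{\alpha\beta}(t_\alpha)\operatorname{Id}_{n_\beta}$ for $\alpha\prec\beta$, where $\Phi^{\alpha\beta}(t_\alpha)=\frac{1}{f_\alpha(t_\alpha-\lambda_\gamma)}\bigl(\det(t_\alpha\operatorname{Id}-L_\alpha)-\det(\lambda_\gamma\operatorname{Id}-L_\alpha)\bigr)$ with $\gamma$ the vertex preceding $\alpha$ on the oriented path from $\beta$ to $\alpha$, and all other blocks zero.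
   Context: Admissible data. Fix $n\ge1$. An admissible data set consists of: a natural number $B\le n$; natural numbers $n_1,\dots,n_B$ with $n_1+\dots+n_B=n$; an in-directed rooted forest $\mathsf F$ with vertex set $\{1,\dots,B\}$, i.e. a directed graph each of whose connected components is a rooted tree with all edges oriented towards its root (so every vertex has a unique oriented path to a root); for an edge from $\beta$ to $\alpha$ we write $\alpha=\operatorname{next}(\beta)$, and for $\alpha\neq\beta$ we write $\alpha\prec\beta$ if there is an oriented path from $\beta$ to $\alpha$; every non-root vertex $\beta$ (equivalently, every edge $\beta\to\operatorname{next}(\beta)$) carries a number $\lambda_\beta$; every vertex $\alpha$ carries a polynomial $P_\alpha(t)=a^\alpha_0+a^\alpha_1t+\dots+a^\alpha_{n_\alpha+1}t^{n_\alpha+1}$ of degree at most $n_\alpha+1$. These are required to satisfy: (i) if $\mathsf F$ has more than one connected component, then $a^\alpha_{n_\alpha+1}=0$ for every root $\alpha$; (ii) if $\alpha=\operatorname{next}(\beta)$, then $P_\alpha(\lambda_\beta)=0$ and $a^\beta_{n_\beta+1}=P_\alpha'(\lambda_\beta)$; (iii) if $\beta\neq\gamma$ satisfy $\operatorname{next}(\beta)=\operatorname{next}(\gamma)=\alpha$ and $\lambda_\beta=\lambda_\gamma=\lambda$, then $\lambda$ is a root of $P_\alpha$ of multiplicity at least $2$. Associated metric. Divide the coordinates $(x^1,\dots,x^n)$ into consecutive blocks $X_\alpha=(x_\alpha^1,\dots,x_\alpha^{n_\alpha})$, $\alpha=1,\dots,B$. Let $L_\alpha=\operatorname{diag}(x_\alpha^1,\dots,x_\alpha^{n_\alpha})$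 (an $n_\alpha\times n_\alpha$ operator), let $g^{\mathsf{LC}}_\alpha=\sum_{s=1}^{n_\alpha}\bigl(\prod_{j\neq s}(x_\alpha^s-x_\alpha^j)\bigr)^{-1}\bigl(\partial/\partial x_\alpha^s\bigr)^2$ (a contravariant metric on the block), and let $f_\alpha=\prod_{s}\det\bigl(\lambda_s\operatorname{Id}-L_{\operatorname{next}(s)}\bigr)^{-1}$, the product over all non-root vertices $s$ with $s\prec\alpha$ or $s=\alpha$ (so $f_\alpha=1$ if $\alpha$ is a root). The associated contravariant metric is the diagonal metric $g=\operatorname{diag}(g_1,\dots,g_B)$ with $g_\alpha=f_\alpha\,P_\alpha(L_\alpha)\,g^{\mathsf{LC}}_\alpha$, i.e. $g^{ii}$ for the coordinate $x_\alpha^s$ equals $f_\alpha P_\alpha(x_\alpha^s)/\prod_{j\ne s}(x_\alpha^s-x_\alpha^j)$. It is considered on an open set where all these quantities are defined and nonzero. Coordinates are allowed to be real or to come in complex-conjugate pairs. *)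

(* Defs.v *)
From HB Require Import structures.
From mathcomp Require Import all_boot all_order all_algebra.
Set Implicit Arguments. Unset Strict Implicit. Unset Printing Implicit Defensive.
Import Order.TTheory GRing.Theory Num.Theory.
Local Open Scope ring_scope.

(* The forest is encoded by [next : 'I_B -> option 'I_B]
   (None = root).  Coordinates x_alpha^s are indexed by the finite type
   [coordT nA] of pairs (alpha, s) with s : 'I_(nA alpha) (0-based, s <-> s+1). *)

Definition coordT (B : nat) (nA : 'I_B -> nat) := {a : 'I_B & 'I_(nA a)}.

Definition cd (B : nat) (nA : 'I_B -> nat) (a : 'I_B) (k : 'I_(nA a))
  : coordT nA := Tagged (fun b => 'I_(nA b)) k.

Fixpoint nextk (B : nat) (next : 'I_B -> option 'I_B) (k : nat) (b : 'I_B)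
  : option 'I_B :=
  match k with 0 => Some b | k'.+1 => obind next (nextk next k' b) end.

Definition is_forest (B : nat) (next : 'I_B -> option 'I_B) : Prop :=
  forall b : 'I_B, exists k, nextk next k b = None.

(* a \prec b : there is an oriented path (of positive length) from b to a.
   In a forest such a path has length <= B, hence the bounded quantifier. *)
Definition prec (B : nat) (next : 'I_B -> option 'I_B) (a b : 'I_B) : bool :=
  [exists k : 'I_B, nextk next k.+1 b == Some a].

Section Metric.
Variables (R : numFieldType) (B : nat) (nA : 'I_B -> nat)
  (next : 'I_B -> option 'I_B) (lam : 'I_B -> R) (P : 'I_B -> {poly R})
  (x : coordT nA -> R).

(* characteristic polynomial det(t Id - L_g) of the block g *)
Definition detL (g : 'I_B) : {poly R} :=
  \prod_(k < nA g) ('X - (x (cd k))%:P).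

(* det(lambda_s Id - L_next(s)) for a non-root s (1 for roots, unused) *)
Definition detval (s : 'I_B) : R :=
  match next s with Some a => (detL a).[lam s] | None => 1 end.

Definition fA (a : 'I_B) : R :=
  \prod_(s : 'I_B | (next s != None) && ((s == a) || prec next s a))
     (detval s)^-1.

(* diagonal entry g^{ii} of the contravariant metric at coordinate x_alpha^s *)
Definition gdiag (c : coordT nA) : R :=
  fA (tag c) * (P (tag c)).[x c] /
  \prod_(k < nA (tag c) | k != tagged c) (x c - x (cd k)).

Definition pred_on_path (a b : 'I_B) : option 'I_B :=
  [pick g | (next g == Some a) && ((g == b) || prec next g b)].

(* diagonal entry (at coordinate c) of S^alpha(t), as a polynomial in t *)
Definition Sdiag (a : 'I_B) (c : coordT nA) : {poly R} :=
  let b := tag c in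
  if b == a then
    (fA a)^-1 *: \prod_(k < nA b | k != tagged c) ('X - (x (cd k))%:P)
  else if prec next a b then
    match pred_on_path a b with
    | Some g => (fA a)^-1 *:
        ((detL a - ((detL a).[lam g])%:P) %/ ('X - (lam g)%:P))
    | None => 0
    end
  else 0.

(* K^alpha(t)^{cc} = g^{cc} * S^alpha(t)_{cc}  (all tensors are diagonal) *)
Definition Kdiag (a : 'I_B) (c : coordT nA) : {poly R} := gdiag c *: Sdiag a c.

(* I^alpha_{j+1}(p) = sum_c (K^alpha_{j+1})^{cc} p_c^2, where K^alpha_{j+1}
   is the coefficient of t^(n_alpha - (j+1)) *)
Definition Integral (p : coordT nA -> R) (col : coordT nA) : R :=
  let a := tag col in
  \sum_(c : coordT nA) (Kdiag a c)`_(nA a - (tagged col).+1) * p c ^+ 2.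

Definition Smat (row col : coordT nA) : R :=
  let b := tag row in let a := tag col in
  let xr := x row in
  if b == a then xr ^+ (nA a - (tagged col).+1) / (P b).[xr]
  else if next a == Some b then
    (if val (tagged col) == 0%N then ((P b).[xr] * (xr - lam a))^-1 else 0)
  else 0.

End Metric.

Definition admissible (R : numFieldType) (B : nat) (nA : 'I_B -> nat)
  (next : 'I_B -> option 'I_B) (lam : 'I_B -> R) (P : 'I_B -> {poly R}) : Prop :=
  [/\ is_forest next,
      (forall a, 0 < nA a)%N,
      (forall a, size (P a) <= (nA a).+2)%N &
   [/\
      ((1 < #|[set a | next a == None]|)%N ->
         forall a, next a = None -> (P a)`_(nA a).+1 = 0),
      (forall a b, next b = Some a ->
         (P a).[lam b] = 0 /\ (P b)`_(nA b).+1 = (P a)^`().[lam b]) &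
      (forall a b g, b != g -> next b = Some a -> next g = Some a ->
         lam b = lam g -> (('X - (lam b)%:P) ^+ 2 %| P a))]].

Definition in_domain (R : numFieldType) (B : nat) (nA : 'I_B -> nat)
  (next : 'I_B -> option 'I_B) (lam : 'I_B -> R) (P : 'I_B -> {poly R})
  (x : coordT nA -> R) : Prop :=
  [/\ (forall a (k l : 'I_(nA a)), k != l -> x (cd k) != x (cd l)),
      (forall s, detval next lam x s != 0) &
      (forall c : coordT nA, (P (tag c)).[x c] != 0)].

(* Main.v *)
Require Import Defs.
From mathcomp Require Import ring.
From HB Require Import structures.
From mathcomp Require Import all_boot all_order all_algebra.
Import Order.TTheory GRing.Theory Num.Theory.
Local Open Scope ring_scope.

Lemma nextk_add B (next : 'I_B -> option 'I_B) m n b :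
  nextk next (m + n) b = obind (nextk next m) (nextk next n b).
Proof.
elim: m => [|m IH] /=; first by case: (nextk next n b).
by rewrite IH; case: (nextk next n b).
Qed.

Lemma nextk_cycle B (next : 'I_B -> option 'I_B) m v :
  is_forest next -> (0 < m)%N -> nextk next m v = Some v -> False.
Proof.
move=> Hf Hm Hv.
have Hq : forall q, nextk next (q * m) v = Some v.
  elim=> [|q IH] //; by rewrite mulSn nextk_add IH /= Hv.
have [k Hk] := Hf v.
have Hkm : (k <= k * m)%N by rewrite leq_pmulr.
have := Hq k; rewrite -(subnK Hkm) nextk_add Hk //.
Qed.
Arguments nextk_cycle {B next}.

Lemma nextk_bound B (next : 'I_B -> option 'I_B) k b a :
  is_forest next -> nextk next k b = Some a -> (k < B)%N.
Proof.
move=> Hf Hk.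
have HS : forall i, (i <= k)%N -> exists u, nextk next i b = Some u.
  move=> i Hi; case E: (nextk next i b) => [u|]; first by exists u.
  by move: Hk; rewrite -(subnK Hi) nextk_add E.
pose f (i : 'I_k.+1) := odflt b (nextk next i b).
have finj : injective f.
  move=> i j; rewrite /f.
  have [u Hu] := HS i (ltn_ord i); have [w Hw] := HS j (ltn_ord j).
  rewrite Hu Hw /= => Huw; subst w.
  apply/val_inj/eqP => /=.
  case: (ltngtP i j) => // Hij; exfalso.
  - apply: (@nextk_cycle _ _ ((j - i)%N) _ Hf); first by rewrite subn_gt0.
    have E : (j:nat) = (j - i + i)%N by rewrite subnK // ltnW.
    rewrite E nextk_add Hu /= in Hw; exact: Hw.
  - apply: (@nextk_cycle _ _ ((i - j)%N) _ Hf); first by rewrite subn_gt0.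
    have E : (i:nat) = (i - j + j)%N by rewrite subnK // ltnW.
    rewrite E nextk_add Hw /= in Hu; exact: Hu.
have := leq_card f finj; by rewrite !card_ord.
Qed.
Arguments nextk_bound {B next k b a}.

Lemma precP B (next : 'I_B -> option 'I_B) a b :
  is_forest next -> prec next a b <-> exists k, nextk next k.+1 b = Some a.
Proof.
move=> Hf; split.
  by move/existsP => [k /eqP Hk]; exists k.
move=> [k Hk]; apply/existsP.
have Hb := nextk_bound Hf Hk.
by exists (Ordinal (ltnW Hb)); apply/eqP.
Qed.
Arguments precP {B next a b}.

Lemma ancP B (next : 'I_B -> option 'I_B) s b :
  is_forest next -> ((s == b) || prec next s b) <-> exists k, nextk next k b = Some s.
Proof.
move=> Hf; split.
  case/orP => [/eqP -> | /(precP Hf) [k Hk]]; [by exists 0%N | by exists k.+1].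
move=> [[|k] Hk]; first by move: Hk => /= [->]; rewrite eqxx.
by apply/orP; right; apply/(precP Hf); exists k.
Qed.
Arguments ancP {B next s b}.

Lemma no_child_anc B (next : 'I_B -> option 'I_B) a be :
  is_forest next -> next a = Some be -> ((a == be) || prec next a be) -> False.
Proof.
move=> Hf Ha /(ancP Hf) [k Hk].
apply: (@nextk_cycle _ _ k.+1 be Hf) => //=.
by rewrite Hk /= Ha.
Qed.
Arguments no_child_anc {B next a be}.

Lemma anc_trans B (next : 'I_B -> option 'I_B) a be b :
  is_forest next -> next a = Some be -> ((a == b) || prec next a b) -> prec next be b.
Proof.
move=> Hf Ha /(ancP Hf) [k Hk].
by apply/(precP Hf); exists k => /=; rewrite Hk.
Qed.
Arguments anc_trans {B next a be b}.

Lemma anc_unique B (next : 'I_B -> option 'I_B) a b g g' :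
  is_forest next -> next g = Some a -> next g' = Some a ->
  ((g == b) || prec next g b) -> ((g' == b) || prec next g' b) -> g = g'.
Proof.
move=> Hf Hg Hg' /(ancP Hf) [i Hi] /(ancP Hf) [j Hj].
have Ei : nextk next i.+1 b = Some a by rewrite /= Hi.
have Ej : nextk next j.+1 b = Some a by rewrite /= Hj.
case: (ltngtP i j) => Hij.
- exfalso; apply: (@nextk_cycle _ _ ((j - i)%N) a Hf); first by rewrite subn_gt0.
  have E : j.+1 = (j - i + i.+1)%N by rewrite addnS subnK // ltnW.
  by rewrite E nextk_add Ei in Ej.
- exfalso; apply: (@nextk_cycle _ _ ((i - j)%N) a Hf); first by rewrite subn_gt0.
  have E : i.+1 = (i - j + j.+1)%N by rewrite addnS subnK // ltnW.
  by rewrite E nextk_add Ej in Ei.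
- by subst j; move: Hi; rewrite Hj => -[].
Qed.
Arguments anc_unique {B next a b g g'}.

Lemma pred_some B (next : 'I_B -> option 'I_B) a b :
  is_forest next -> prec next a b ->
  exists g, [/\ pred_on_path next a b = Some g, next g = Some a &
              ((g == b) || prec next g b)].
Proof.
move=> Hf /(precP Hf) [k Hk].
rewrite /pred_on_path; case: pickP => [g /andP [/eqP Hg Hgb] | H0].
  by exists g.
exfalso; move: Hk => /=; case E: (nextk next k b) => [g|] //= Hg.
have := H0 g; rewrite Hg eqxx /=.
have -> : (g == b) || prec next g b by apply/(ancP Hf); exists k.
by [].
Qed.
Arguments pred_some {B next a b}.
Lemma sum_sigT (R : nmodType) (I : finType) (J : I -> finType) (G : {i : I & J i} -> R) :
  \sum_(p : {i : I & J i}) G p = \sum_(i : I) \sum_(j : J i) G (Tagged J j).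
Proof.
symmetry.
rewrite (@sig_big_dep _ _ _ I J xpredT (fun _ _ => true) (fun i j => G (Tagged J j))) /=.
by apply: eq_bigr => -[i j].
Qed.

Lemma hsum (R : numFieldType) (n : nat) (q : {poly R}) (y : R) :
  (size q <= n)%N ->
  \sum_(j < n) y ^+ (n - j.+1) * q`_(n - j.+1) = q.[y].
Proof.
move=> Hs; rewrite (horner_coef_wide y Hs).
rewrite (reindex_inj rev_ord_inj) /=; apply: eq_bigr => j _.
have -> : (n - (rev_ord j).+1)%N = j.
  rewrite /= subnS subKn; last exact: ltn_ord. by [].
by rewrite mulrC.
Qed.

Set Implicit Arguments. Unset Strict Implicit.
Definition qdivX (R : numFieldType) (p : {poly R}) (mu : R) :=
  (p - (p.[mu])%:P) %/ ('X - mu%:P).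

Lemma qdivX_mul (R : numFieldType) (p : {poly R}) (mu : R) :
  qdivX p mu * ('X - mu%:P) = p - (p.[mu])%:P.
Proof.
apply: divpK; rewrite dvdp_XsubCl /root !hornerE subrr //.
Qed.


Lemma qdivX_eval (R : numFieldType) (p : {poly R}) (mu y : R) :
  y != mu -> (qdivX p mu).[y] = (p.[y] - p.[mu]) / (y - mu).
Proof.
move=> Hy; have := congr1 (fun q => q.[y]) (qdivX_mul p mu).
rewrite /= hornerM hornerXsubC !hornerE => <-.
by rewrite mulfK // subr_eq0.
Qed.

Lemma qdivX_monic (R : numFieldType) (p : {poly R}) (mu : R) :
  p \is monic -> (1 < size p)%N ->
  qdivX p mu \is monic /\ size (qdivX p mu) = (size p).-1.
Proof.
move=> Hm Hs.
have HsD : size (p - (p.[mu])%:P) = size p.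
  rewrite size_polyDl // size_polyN; exact: leq_ltn_trans (size_polyC_leq1 _) Hs.
have HlD : lead_coef (p - (p.[mu])%:P) = 1.
  rewrite lead_coefDl; first exact/monicP.
  rewrite size_polyN; exact: leq_ltn_trans (size_polyC_leq1 _) Hs.
have Hmul := qdivX_mul p mu.
have HQ0 : qdivX p mu != 0.
  apply/eqP => HQ; move: HsD; rewrite -Hmul HQ mul0r size_poly0 => H.
  by rewrite -H in Hs.
split.
  by rewrite monicE -(lead_coef_Mmonic _ (monicXsubC mu)) Hmul HlD.
by rewrite -HsD -Hmul size_Mmonic ?monicXsubC // size_XsubC addn2.
Qed.

Lemma size_prodX (R : numFieldType) (T : finType) (P : pred T) (h : T -> R) :
  size (\prod_(k | P k) ('X - (h k)%:P)) = #|P|.+1.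
Proof.
rewrite -big_filter -(big_map h predT (fun y => 'X - y%:P)) size_prod_XsubC size_map.
by rewrite cardE /enum_mem size_filter.
Qed.

Lemma prodX_monic (R : numFieldType) (T : finType) (P : pred T) (h : T -> R) :
  \prod_(k | P k) ('X - (h k)%:P) \is monic.
Proof. exact: monic_prod_XsubC. Qed.

Lemma size_detL (R : numFieldType) B (nA : 'I_B -> nat) (x : coordT nA -> R) a :
  size (detL x a) = (nA a).+1.
Proof.
rewrite /detL (size_prodX xpredT (fun k => x (cd k))).
by rewrite card_ord.
Qed.

Unset Implicit Arguments. Set Strict Implicit.
Lemma fA_next (R : numFieldType) B (nA : 'I_B -> nat) (next : 'I_B -> option 'I_B)
  (lam : 'I_B -> R) (x : coordT nA -> R) g be :
  is_forest next -> next g = Some be ->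
  fA next lam x g = (detval next lam x g)^-1 * fA next lam x be.
Proof.
move=> Hf Hn; rewrite /fA (bigD1 g) /=; last by rewrite Hn eqxx.
congr (_ * _); apply: eq_bigl => s.
case: (eqVneq s g) => [->|Hsg] /=.
  rewrite andbF; symmetry; apply/negbTE/negP => /andP [_ H].
  exact: (no_child_anc Hf Hn H).
rewrite andbT; congr (_ && _).
apply/idP/idP.
  move/(precP Hf) => [k Hk]; apply/(ancP Hf); exists k.
  by rewrite -addn1 nextk_add /= Hn in Hk.
move/(ancP Hf) => [k Hk]; apply/(precP Hf); exists k.
by rewrite -addn1 nextk_add /= Hn.
Qed.

Lemma coefK (R : numFieldType) B (nA : 'I_B -> nat) (next : 'I_B -> option 'I_B)
  (lam : 'I_B -> R) (P : 'I_B -> {poly R}) (x : coordT nA -> R) a (c : coordT nA) :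
  is_forest next -> (0 < nA a)%N ->
  (Kdiag next lam P x a c)`_(nA a - 1) =
  if (a == tag c) || prec next a (tag c) then gdiag next lam P x c * (fA next lam x a)^-1
  else 0.
Proof.
move=> Hf Hpos; rewrite /Kdiag coefZ /Sdiag.
case: c => b k /=.
case: (eqVneq b a) => [Hab|Hba] /=.
  subst b; rewrite coefZ.
  set q := \prod_(_ < _ | _) _.
  have Hs : size q = nA a.
    rewrite /q (size_prodX (fun l : 'I_(nA a) => l != k)).
    have := cardC1 k; rewrite card_ord => ->. by rewrite prednK.
  have : lead_coef q = 1 by apply/monicP; exact: prodX_monic.
  by rewrite lead_coefE Hs subn1 => ->; rewrite mulr1.
case Hp: (prec next a b); last by rewrite coef0 mulr0.
have [g [-> _ _]] := pred_some Hf Hp.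
rewrite coefZ.
have Hm : detL x a \is monic by exact: prodX_monic.
have Hs2 : (1 < size (detL x a))%N by rewrite size_detL ltnS.
have [Hqm Hs] := qdivX_monic (lam g) Hm Hs2.
move: Hqm; rewrite monicE lead_coefE Hs size_detL /= subn1 /qdivX => /eqP ->.
by rewrite mulr1.
Qed.

Lemma fA_neq0 (R : numFieldType) B (nA : 'I_B -> nat) (next : 'I_B -> option 'I_B)
  (lam : 'I_B -> R) (x : coordT nA -> R) a :
  (forall s, detval next lam x s != 0) -> fA next lam x a != 0.
Proof.
move=> Hd; apply/prodf_neq0 => s _; by rewrite invr_eq0.
Qed.

Lemma inner_eq (R : numFieldType) B (nA : 'I_B -> nat) (next : 'I_B -> option 'I_B)
  (lam : 'I_B -> R) (P : 'I_B -> {poly R}) (x : coordT nA -> R) :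
  is_forest next -> (forall a, 0 < nA a)%N ->
  (forall a (k l : 'I_(nA a)), k != l -> x (cd k) != x (cd l)) ->
  (forall s, detval next lam x s != 0) ->
  (forall c : coordT nA, (P (tag c)).[x c] != 0) ->
  forall row c : coordT nA,
  \sum_(col : coordT nA) Smat next lam P x row col *
      (Kdiag next lam P x (tag col) c)`_(nA (tag col) - (tagged col).+1)
  = (c == row)%:R.
Proof.
move=> Hf Hpos Hdist Hdet HP row c.
rewrite sum_sigT; case: row => be i; case: c => b k.
set xr := x (Tagged (fun b => 'I_(nA b)) i).
have HPr : (P be).[xr] != 0 by exact: (HP (Tagged (fun b => 'I_(nA b)) i)).
have T2 : forall a, a != be ->
   \sum_(j : 'I_(nA a)) Smat next lam P x (Tagged (fun b => 'I_(nA b)) i)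
        (Tagged (fun b => 'I_(nA b)) j) *
      (Kdiag next lam P x a (Tagged (fun b0 => 'I_(nA b0)) k))`_(nA a - j.+1)
   = if next a == Some be then ((P be).[xr] * (xr - lam a))^-1 *
        (if (a == b) || prec next a (b)
         then gdiag next lam P x (Tagged (fun b0 => 'I_(nA b0)) k) * (fA next lam x a)^-1 else 0)
     else 0.
  move=> a Ha; rewrite -coefK //.
  rewrite /Smat /= eq_sym (negbTE Ha).
  case: eqP => Hn; last by rewrite big1 // => j _; rewrite mul0r.
  rewrite (bigD1 (Ordinal (Hpos a))) //= ?eqxx big1 ?addr0 // => j Hj.
  by rewrite ifN ?mul0r.

rewrite (bigD1 be) //=.
have T1 : \sum_(j : 'I_(nA be)) Smat next lam P x (Tagged (fun b => 'I_(nA b)) i)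
        (Tagged (fun b => 'I_(nA b)) j) *
      (Kdiag next lam P x be (Tagged (fun b0 => 'I_(nA b0)) k))`_(nA be - j.+1)
   = \sum_(j : 'I_(nA be)) xr ^+ (nA be - j.+1) * (Kdiag next lam P x be (Tagged (fun b0 => 'I_(nA b0)) k))`_(nA be - j.+1)
      / (P be).[xr].
  apply: eq_bigr => j _.
  by rewrite /Smat /= ?eqxx mulrAC.
rewrite T1 -mulr_suml (eq_bigr _ T2) /=; clear T1 T2.
have Hxr : forall l : 'I_(nA be), l != i -> xr != x (cd l).
  move=> l Hl; apply: Hdist; by rewrite eq_sym.
case: (eqVneq b be) => [Hbe|Hb].
  subst b.
  rewrite [X in _ + X]big1 ?addr0; last first.
    move=> a Ha; case: eqP => Hn //; rewrite ifN ?mulr0 //; apply/negP => H.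
    exact: (no_child_anc Hf Hn H).
  have HK : Kdiag next lam P x be (Tagged (fun b => 'I_(nA b)) k) =
     (gdiag next lam P x (Tagged (fun b => 'I_(nA b)) k) * (fA next lam x be)^-1) *:
     \prod_(l < nA be | l != k) ('X - (x (cd l))%:P).
    by rewrite /Kdiag /Sdiag /= eqxx scalerA.
  have Hs : (size (Kdiag next lam P x be (Tagged (fun b => 'I_(nA b)) k)) <= nA be)%N.
    rewrite HK; apply: leq_trans (size_scale_leq _ _) _.
    rewrite (size_prodX (fun l : 'I_(nA be) => l != k)).
    have := cardC1 k; rewrite card_ord => ->. by rewrite prednK.
  rewrite hsum // HK hornerZ horner_prod.
  under eq_bigr do rewrite hornerXsubC.
  case: (eqVneq k i) => [Hki|Hki].
    subst k; rewrite eqxx /gdiag /=.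
    have Hpr : \prod_(l < nA be | l != i) (xr - x (cd l)) != 0.
      by apply/prodf_neq0 => l Hl; rewrite subr_eq0; exact: Hxr.
    have Hfa : fA next lam x be != 0 by exact: fA_neq0.
    rewrite /xr in Hpr HPr *.
    field.
    by rewrite Hpr Hfa HPr.
  rewrite (bigD1 i) /=; last by rewrite eq_sym.
  rewrite subrr mul0r mulr0 mul0r.
  rewrite eq_Tagged /=; by rewrite (negbTE Hki).
have -> : (Tagged (fun b => 'I_(nA b)) k == Tagged (fun b => 'I_(nA b)) i) = false.
  apply/negbTE; apply: contra Hb => /eqP H; apply/eqP; exact: (congr1 tag H).
case Hp: (prec next be b); last first.
  have HK : Kdiag next lam P x be (Tagged (fun b => 'I_(nA b)) k) = 0.
    by rewrite /Kdiag /Sdiag /= (negbTE Hb) Hp scaler0.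
  rewrite HK big1 ?mul0r ?add0r; last by move=> j _; rewrite coef0 mulr0.
  apply: big1 => a Ha; case: eqP => Hn //; rewrite ifN ?mulr0 //; apply/negP => H.
  by rewrite (anc_trans Hf Hn H) in Hp.
have [g [Hpop Hng Hgb]] := pred_some Hf Hp.
have HK : Kdiag next lam P x be (Tagged (fun b => 'I_(nA b)) k) =
   (gdiag next lam P x (Tagged (fun b => 'I_(nA b)) k) * (fA next lam x be)^-1) *:
   qdivX (detL x be) (lam g).
  by rewrite /Kdiag /Sdiag /= (negbTE Hb) Hp Hpop scalerA.
have Hm : detL x be \is monic by exact: prodX_monic.
have Hs2 : (1 < size (detL x be))%N by rewrite size_detL ltnS.
have [_ HsQ] := qdivX_monic (lam g) Hm Hs2.
have Hs : (size (Kdiag next lam P x be (Tagged (fun b => 'I_(nA b)) k)) <= nA be)%N.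
  by rewrite HK; apply: leq_trans (size_scale_leq _ _) _; rewrite HsQ size_detL.
have Hdg : detval next lam x g = (detL x be).[lam g] by rewrite /detval Hng.
have Hd0 : (detL x be).[xr] = 0.
  rewrite /detL horner_prod (bigD1 i) //= hornerXsubC subrr mul0r //.
have Hxl : xr != lam g.
  apply: contraNneq (Hdet g) => E; by rewrite Hdg -E Hd0.
rewrite hsum // HK hornerZ qdivX_eval // Hd0.
have Hgbe : g != be.
  apply/eqP => E; apply: (no_child_anc Hf Hng); by rewrite E eqxx.
rewrite (bigD1 g) //= Hng eqxx Hgb /=.
rewrite big1 ?addr0; last first.
  move=> a /andP [Ha Hag]; case: eqP => Hn //; rewrite ifN ?mulr0 //; apply/negP => H.
  by rewrite (anc_unique Hf Hn Hng H Hgb) eqxx in Hag.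
rewrite (@fA_next _ _ _ _ lam x _ _ Hf Hng) Hdg.
have Hfa : fA next lam x be != 0 by exact: fA_neq0.
have Hd : (detL x be).[lam g] != 0 by rewrite -Hdg.
have Hxl' : xr - lam g != 0 by rewrite subr_eq0.
field.
by rewrite Hfa Hd HPr Hxl'.
Qed.

Theorem theorem1p4 (R : numFieldType) (B : nat) (nA : 'I_B -> nat)
  (next : 'I_B -> option 'I_B) (lam : 'I_B -> R) (P : 'I_B -> {poly R}) :
  (0 < B)%N ->
  admissible nA next lam P ->
  forall x : coordT nA -> R, in_domain next lam P x ->
  forall (p : coordT nA -> R) (row : coordT nA),
    \sum_(col : coordT nA) Smat next lam P x row col * Integral next lam P x p col
    = p row ^+ 2.
Proof.
move=> _ [Hf Hpos _ _] x [Hdist Hdet HP] p row.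
rewrite /Integral.
under eq_bigr => col _ do rewrite mulr_sumr.
rewrite exchange_big /=.
transitivity (\sum_(c : coordT nA) (c == row)%:R * p c ^+ 2).
  apply: eq_bigr => c _.
  rewrite -(@inner_eq _ _ _ _ _ P _ Hf Hpos Hdist Hdet HP row c) mulr_suml.
  by apply: eq_bigr => col _; rewrite mulrA.
rewrite (bigD1 row) //= eqxx mul1r big1 ?addr0 // => c /negbTE ->.
by rewrite mul0r.
Qed.
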